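(* Let $X$ be the Coxeter realization of a building of triangle type $(2,k,m)$ with $k\ge3$ and $m\ge6$. Let $v,v'$ be two vertices of type $\mathbf{k}$ adjacent to a vertex $w$ of type $\mathbf{2}$. Then $w$ is the unique vertex of type $\mathbf 2$ adjacent to both $v$ and $v'$. Moreover, if $v,v'$ are both adjacent to a vertex $u$ of type $\mathbf m$, then $w$ and $u$ are adjacent.
   Context: Buildings have finite thickness; the Coxeter realization is the simplicial complex whose apartments are Coxeter complexes of the triangle group. A vertex is of type $\mathbf{j}$ ($j\in\{2,k,m\}$) if its stabilizer in an apartment is dihedral of order $2j$, equivalently its link is a bipartite graph of girth $2j$; when $k=m$ the two types $\mathbf k$ and $\mathbf m$ are still distinguished (as the two types of vertices of a chamber other than type $\mathbf 2$). *)

(* Defs.v *)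
From mathcomp Require Import all_boot.
From Stdlib Require Import Relations.
From Stdlib Require List.
Set Implicit Arguments. Unset Strict Implicit. Unset Printing Implicit Defensive.

(* Generators s_0, s_1, s_2 of the Coxeter system. *)
Definition word := seq 'I_3.

Definition coxm (k m : nat) (i j : 'I_3) : nat :=
  if i == j then 1
  else if (i != 0 :> nat) && (j != 0 :> nat) then 2
  else if (i == 1 :> nat) || (j == 1 :> nat) then m
  else k.

(* Equality in the Coxeter group W = < S | (s t)^m(s,t) = 1 > :
   the congruence on words generated by deleting a relator
   (s t)^{m(s,t)} (this includes s s for s = t). *)
Inductive weq (k m : nat) : word -> word -> Prop :=
| weq_refl u : weq k m u u
| weq_sym u v : weq k m u v -> weq k m v u
| weq_trans u v w : weq k m u v -> weq k m v w -> weq k m u w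
| weq_rel u v (i j : 'I_3) :
    weq k m (u ++ flatten (nseq (coxm k m i j) [:: i; j]) ++ v) (u ++ v).

Definition coxlen (k m : nat) (w : word) (n : nat) : Prop :=
  (exists w', weq k m w w' /\ size w' = n) /\
  (forall w', weq k m w w' -> n <= size w').

(** * Buildings of type (2,k,m) as W-metric spaces (Abramenko-Brown, Def. 5.1) *)

Definition is_building (k m : nat) (Ch : Type) (delta : Ch -> Ch -> word) : Prop :=
  (forall C D, weq k m (delta C D) [::] <-> C = D) /\
  (forall C D C' (s : 'I_3), weq k m (delta C' C) [:: s] ->
      (weq k m (delta C' D) (s :: delta C D) \/ weq k m (delta C' D) (delta C D)) /\
      ((forall n, coxlen k m (delta C D) n -> coxlen k m (s :: delta C D) n.+1) ->
         weq k m (delta C' D) (s :: delta C D))) /\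
  (forall C D (s : 'I_3), exists C',
      weq k m (delta C' C) [:: s] /\ weq k m (delta C' D) (s :: delta C D)).

Definition sadj (k m : nat) (Ch : Type) (delta : Ch -> Ch -> word)
  (s : 'I_3) (C D : Ch) : Prop := weq k m (delta C D) [:: s].

Definition finite_thickness (k m : nat) (Ch : Type) (delta : Ch -> Ch -> word) : Prop :=
  forall (C : Ch) (s : 'I_3), exists l : list Ch,
    forall D, sadj k m delta s C D -> List.In D l.

(* A vertex of cotype i is a residue of type S \ {i}: the set of chambers
   reachable from a given chamber by a gallery whose steps have types
   different from i.  We represent a vertex by any chamber containing it;
   [samevert i C D] means C and D determine the same cotype-i vertex. *)
Definition samevert (k m : nat) (Ch : Type) (delta : Ch -> Ch -> word)
  (i : 'I_3) : relation Ch :=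
  clos_refl_trans Ch (fun C D => exists s : 'I_3, s != i /\ sadj k m delta s C D).

Definition vadj (k m : nat) (Ch : Type) (delta : Ch -> Ch -> word)
  (i : 'I_3) (C : Ch) (j : 'I_3) (D : Ch) : Prop :=
  i != j /\ exists E : Ch, samevert k m delta i C E /\ samevert k m delta j D E.

(* Vertex types: cotype 0 <-> type 2 (residue of type {s1,s2}, m = 2),
   cotype 1 <-> type k ({s0,s2}), cotype 2 <-> type m ({s0,s1}). *)
Definition type2 : 'I_3 := @Ordinal 3 0 isT.
Definition typek : 'I_3 := @Ordinal 3 1 isT.
Definition typem : 'I_3 := @Ordinal 3 2 isT.

(* Submission.v *)
From Stdlib Require Import Reals Lra Lia Relations Classical.
From mathcomp Require Import all_boot zify.
Require Import Defs.

Set Implicit Arguments. Unset Strict Implicit. Unset Printing Implicit Defensive.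


Section Words.
Variables (k m : nat).
Local Notation weq := (weq k m).

Lemma weq_ctx u v w z : weq u v -> weq (w ++ u ++ z) (w ++ v ++ z).
Proof.
elim=> {u v} [u|u v _ IH|u v x _ IH1 _ IH2|u v i j].
- exact: weq_refl.
- exact: weq_sym.
- exact: weq_trans IH1 IH2.
- have := weq_rel k m (w ++ u) (v ++ z) i j.
  by rewrite !catA.
Qed.

Lemma weq_cons s u v : weq u v -> weq (s :: u) (s :: v).
Proof. by move=> /(weq_ctx [:: s] [::]); rewrite !cats0. Qed.

Lemma weq_catl w u v : weq u v -> weq (w ++ u) (w ++ v).
Proof. by move=> /(weq_ctx w [::]); rewrite !cats0. Qed.

Lemma weq_catr z u v : weq u v -> weq (u ++ z) (v ++ z).
Proof. by move=> /(weq_ctx [::] z). Qed.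

Lemma coxm_ii i : coxm k m i i = 1.
Proof. by rewrite /coxm eqxx. Qed.

Lemma coxm_sym i j : coxm k m i j = coxm k m j i.
Proof.
rewrite /coxm eq_sym; case: (j == i) => //.
by rewrite andbC orbC.
Qed.

Lemma weq_sq u i v : weq (u ++ [:: i; i] ++ v) (u ++ v).
Proof. by have := weq_rel k m u v i i; rewrite coxm_ii. Qed.

Lemma weq_sq0 i v : weq (i :: i :: v) v.
Proof. exact: (weq_sq [::] i v). Qed.

Lemma weq_inv u : weq (rev u ++ u) [::].
Proof.
elim: u => [|s u IH] /=; first exact: weq_refl.
rewrite rev_cons cat_rcons.
apply: weq_trans IH.
have := weq_sq (rev u) s u. by [].
Qed.

Lemma weq_inv' u : weq (u ++ rev u) [::].
Proof. by have := weq_inv (rev u); rewrite revK. Qed.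

Lemma flatten_nseqS n (s : word) : flatten (nseq n.+1 s) = flatten (nseq n s) ++ s.
Proof. by elim: n => [|n IH] /=; [rewrite cats0 | rewrite -catA -IH]. Qed.

Lemma rev_flatten_nseq n (i j : 'I_3) :
  rev (flatten (nseq n [:: i; j])) = flatten (nseq n [:: j; i]).
Proof.
elim: n => [|n IH] //.
by rewrite flatten_nseqS rev_cat IH.
Qed.

Lemma weq_rev u v : weq u v -> weq (rev u) (rev v).
Proof.
elim=> {u v} [u|u v _ IH|u v x _ IH1 _ IH2|u v i j].
- exact: weq_refl.
- exact: weq_sym.
- exact: weq_trans IH1 IH2.
- rewrite !rev_cat rev_flatten_nseq coxm_sym.
  have := weq_rel k m (rev v) (rev u) j i. by rewrite catA.
Qed.

Lemma size_flatten_nseq n (s : word) : size (flatten (nseq n s)) = n * size s.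
Proof. by elim: n => [|n IH] //=; rewrite size_cat IH mulSn. Qed.

Lemma weq_odd u v : weq u v -> odd (size u) = odd (size v).
Proof.
elim=> {u v} [u|u v _ IH|u v x _ IH1 _ IH2|u v i j] //.
- by rewrite IH1 IH2.
- rewrite !size_cat size_flatten_nseq /= !oddD oddM /=.
  by rewrite andbF addFb.
Qed.

Lemma weq_s0 s : ~ weq [:: s] [::].
Proof. by move/weq_odd. Qed.

Lemma weq_cancel u v v' : weq (u ++ v) [::] -> weq (u ++ v') [::] -> weq v v'.
Proof.
move=> h1 h2.
apply: (@weq_trans _ _ _ ((rev u ++ u) ++ v)).
  by apply: weq_sym; apply: (weq_catr v (weq_inv u)).
rewrite -catA.
apply: (@weq_trans _ _ _ (rev u ++ [::])); first exact: weq_catl.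
apply: (@weq_trans _ _ _ (rev u ++ (u ++ v'))); first by apply: weq_catl; apply: weq_sym.
rewrite catA.
exact: (weq_catr v' (weq_inv u)).
Qed.

End Words.


Notation i0 := type2.
Notation i1 := typek.
Notation i2 := typem.

Definition cc (t : nat) : 'I_3 := if odd t then i2 else i0.
Fixpoint wd (t : nat) : word := if t is t'.+1 then cc t' :: wd t' else [::].

Section NF.
Variables (k m : nat).
Hypothesis hk : 0 < k.
Local Notation weq := (weq k m).

Lemma wd_double j : wd (j.*2) = flatten (nseq j [:: i2; i0]).
Proof.
elim: j => [|j IH] //.
by rewrite doubleS /= /cc /= odd_double /= IH.
Qed.

Lemma wd2k : weq (wd (k.*2)) [::].
Proof.
rewrite wd_double.
have := weq_rel k m [::] [::] i2 i0.
by rewrite /= cats0 /coxm.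
Qed.

Lemma wd2k1 : weq (wd (k.*2).-1) [:: i2].
Proof.
have e : wd (k.*2) = i2 :: wd (k.*2).-1.
  case: k hk => // k' _; rewrite doubleS /= /cc /= odd_double //.
have h := wd2k; rewrite e in h.
apply: (weq_trans (weq_sym (weq_sq0 k m i2 _))).
exact: (weq_cons i2 h).
Qed.

Lemma wd2k2 : weq (wd (k.*2).-2) [:: i0; i2].
Proof.
have e : wd (k.*2) = [:: i2; i0] ++ wd (k.*2).-2.
  case: k hk => // k' _; rewrite doubleS /= /cc /= odd_double //.
have h := wd2k; rewrite e in h.
apply: (weq_cancel h).
exact: (weq_inv' k m [:: i2; i0]).
Qed.

Lemma nf_cons (s : 'I_3) t : s != i1 -> t < k.*2 ->
  exists t', t' < k.*2 /\ weq (s :: wd t) (wd t').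
Proof.
move=> hs ht.
have [e|ne] := eqVneq s (cc t).
  rewrite e; change (cc t :: wd t) with (wd t.+1); case: (ltnP t.+1 k.*2) => h.
    by exists t.+1; split => //; exact: weq_refl.
  have -> : t.+1 = k.*2 by apply/eqP; rewrite eqn_leq h ht.
  exists 0; split; first by rewrite double_gt0.
  exact: wd2k.
case: t ht ne => [|t] ht ne.
  exists (k.*2).-1; split; first by rewrite prednK ?double_gt0.
  have -> : s = i2.
    move: hs ne; rewrite /cc /=.
    by case: s => [[|[|[|]]] ?] //= _ _; apply/val_inj.
  exact: (weq_sym wd2k1).
exists t; split; first by apply: ltnW.
have -> : s = cc t.
  move: hs ne; rewrite /cc /=.
  by case: (odd t); case: s => [[|[|[|]]] ?] //= _ _; apply/val_inj.
exact: weq_sq0.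
Qed.

Lemma nf_all (f : word) : all (fun s => s != i1) f ->
  exists t, t < k.*2 /\ weq f (wd t).
Proof.
elim: f => [|s f IH] /=.
  by move=> _; exists 0; split; [rewrite double_gt0 | exact: weq_refl].
case/andP=> hs /IH [t [ht e]].
have [t' [ht' e']] := nf_cons hs ht.
exists t'; split => //.
exact: weq_trans (weq_cons s e) e'.
Qed.

Lemma comm12 : weq [:: i2; i1] [:: i1; i2].
Proof.
apply: (weq_cancel (u:=[:: i1; i2])).
  exact: (weq_inv' k m [:: i1; i2]).
have := weq_rel k m [::] [::] i1 i2.
by rewrite /= /coxm.
Qed.

Definition nf12 (f : word) :=
  weq f [::] \/ weq f [:: i1] \/ weq f [:: i2] \/ weq f [:: i1; i2].

Lemma nf12_all (f : word) : all (fun s => s != i0) f -> nf12 f.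
Proof.
elim: f => [|s f IH] /=.
  by move=> _; left; exact: weq_refl.
case/andP=> hs /IH h.
have hs' : s = i1 \/ s = i2.
  by move: hs; case: s => [[|[|[|]]] ?] //= _; [left|right]; apply/val_inj.
rewrite /nf12.
case: hs' => ->; case: h => [e|[e|[e|e]]]; move: (weq_cons i1 e) (weq_cons i2 e) => e1 e2.
- by right; left.
- by left; apply: weq_trans e1 (weq_sq0 _ _ _ _).
- by right; right; right.
- by right; right; left; apply: weq_trans e1 (weq_sq0 k m i1 [:: i2]).
- by right; right; left.
- by right; right; right; apply: weq_trans e2 comm12.
- by left; apply: weq_trans e2 (weq_sq0 _ _ _ _).
- right; left. apply: weq_trans e2 _.
  apply: (@weq_trans _ _ _ ([:: i1; i2] ++ [:: i2])).
    exact: (weq_catr [:: i2] comm12).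
  exact: (weq_sq k m [:: i1] i2 [::]).
Qed.

End NF.


Section Bldg.
Variables (k m : nat) (Ch : Type) (delta : Ch -> Ch -> word).
Hypothesis hB : is_building k m delta.
Local Notation weq := (weq k m).
Local Notation sv := (samevert k m delta).

Lemma d_refl C : weq (delta C C) [::].
Proof. by apply: (proj1 hB C C).2. Qed.

Lemma d_eq C D : weq (delta C D) [::] -> C = D.
Proof. by move/(proj1 hB C D).1. Qed.

Lemma wd2a C D C' s : weq (delta C' C) [:: s] ->
  weq (delta C' D) (s :: delta C D) \/ weq (delta C' D) (delta C D).
Proof. by move=> h; have [h1 _] := (proj1 (proj2 hB)) C D C' s h. Qed.

Lemma wd2b C D C' s : weq (delta C' C) [:: s] ->
  (forall n, coxlen k m (delta C D) n -> coxlen k m (s :: delta C D) n.+1) ->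
  weq (delta C' D) (s :: delta C D).
Proof. by move=> h; have [_ h2] := (proj1 (proj2 hB)) C D C' s h. Qed.

Lemma wd3 C D s : exists C', weq (delta C' C) [:: s] /\ weq (delta C' D) (s :: delta C D).
Proof. exact: (proj2 (proj2 hB)). Qed.

Lemma sadj_sym s C D : weq (delta C D) [:: s] -> weq (delta D C) [:: s].
Proof.
move=> h.
case: (wd2a C h) => h'.
- have h2 := weq_trans (weq_sym h') (d_refl C).
  have h3 := weq_cons s h2.
  exact: weq_trans (weq_sym (weq_sq0 k m s _)) h3.
- have e : D = C by apply: d_eq; apply: weq_trans (weq_sym h') (d_refl C).
  subst D. by case: (weq_s0 (weq_trans (weq_sym h) (d_refl C))).
Qed.

Lemma sv_refl i C : sv i C C.
Proof. exact: rt_refl. Qed.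

Lemma sv_trans i C D E : sv i C D -> sv i D E -> sv i C E.
Proof. exact: rt_trans. Qed.

Lemma sv_sym i C D : sv i C D -> sv i D C.
Proof.
elim=> [x y [s [hs h]]|x|x y z _ IH1 _ IH2].
- apply: rt_step; exists s; split => //; exact: sadj_sym.
- exact: rt_refl.
- exact: rt_trans IH2 IH1.
Qed.

Lemma sv_delta i X Y D : sv i X Y ->
  exists g, all (fun s => s != i) g /\ weq (delta X D) (g ++ delta Y D).
Proof.
move/clos_rt_rt1n_iff; elim=> [x|x y z [s [hs h]] _ [g [hg e]]].
- by exists [::]; split => //; exact: weq_refl.
- case: (wd2a D h) => h'.
  + exists (s :: g); split; first by rewrite /= hs hg.
    exact: weq_trans h' (weq_cons s e).
  + exists g; split => //; exact: weq_trans h' e.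
Qed.

Lemma sv_in i X Y : sv i X Y ->
  exists g, all (fun s => s != i) g /\ weq (delta X Y) g.
Proof.
move=> /(sv_delta Y) [g [hg e]]; exists g; split => //.
apply: weq_trans e _.
have := weq_catl g (d_refl Y). by rewrite cats0.
Qed.

Lemma gal_sv i f C D : all (fun s => s != i) f -> weq (delta C D) f -> sv i C D.
Proof.
elim: f C => [|s f IH] C /=.
  by move=> _ /d_eq ->; exact: rt_refl.
case/andP=> hs hf e.
have [C' [h1 h2]] := wd3 C D s.
have e' : weq (delta C' D) f.
  apply: weq_trans h2 _. apply: weq_trans (weq_cons s e) _. exact: weq_sq0.
apply: rt_trans (IH C' hf e').
apply: rt_step; exists s; split => //; exact: sadj_sym.
Qed.

Lemma gal_sv2 i j f1 f2 C D : all (fun s => s != i) f1 -> all (fun s => s != j) f2 ->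
  weq (delta C D) (f1 ++ f2) -> exists K, sv i C K /\ sv j K D.
Proof.
elim: f1 C => [|s f IH] C /=.
  by move=> _ h2 e; exists C; split; [exact: rt_refl | exact: gal_sv h2 e].
case/andP=> hs hf h2 e.
have [C' [h1 h1']] := wd3 C D s.
have e' : weq (delta C' D) (f ++ f2).
  apply: weq_trans h1' _. apply: weq_trans (weq_cons s e) _. exact: weq_sq0.
have [K [hK1 hK2]] := IH C' hf h2 e'.
exists K; split => //.
apply: rt_trans hK1.
apply: rt_step; exists s; split => //; exact: sadj_sym.
Qed.

Definition red (f : word) := coxlen k m f (size f).

Lemma coxlen_weq u v n : weq u v -> coxlen k m u n -> coxlen k m v n.
Proof.
move=> e [[w [e1 s1]] h]; split.
  by exists w; split => //; exact: weq_trans (weq_sym e) e1.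
by move=> w' e'; apply: h; exact: weq_trans e e'.
Qed.

Lemma coxlen_uniq u n n' : coxlen k m u n -> coxlen k m u n' -> n = n'.
Proof.
move=> [[w [e1 s1]] h] [[w' [e1' s1']] h'].
apply/eqP; rewrite eqn_leq.
have a := h w' e1'; have b := h' w e1.
by rewrite s1' in a; rewrite s1 in b; rewrite a b.
Qed.

Lemma red_prefix u v : red (u ++ v) -> red u.
Proof.
move=> [_ h]; split; first by exists u; split => //; exact: weq_refl.
move=> w e; have := h _ (weq_catr v e).
by rewrite !size_cat leq_add2r.
Qed.

Lemma red_rev u : red u -> red (rev u).
Proof.
move=> [_ h]; split; first by exists (rev u); split => //; exact: weq_refl.
move=> w e; have e' := weq_rev e; rewrite revK in e'.
by have := h _ e'; rewrite !size_rev.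
Qed.

Lemma red_exists w : exists f, weq w f /\ red f.
Proof.
move: {2}(size w) (leqnn (size w)) => n; elim: n w => [|n IH] w hw.
  exists w; split; first exact: weq_refl.
  split; first by exists w; split => //; exact: weq_refl.
  by move=> w' _; move: hw; rewrite leqn0 => /eqP ->.
case: (classic (red w)) => hr; first by exists w; split => //; exact: weq_refl.
have : exists w', weq w w' /\ size w' < size w.
  apply: NNPP => hn; apply: hr; split.
    by exists w; split => //; exact: weq_refl.
  move=> w' e; rewrite leqNgt; apply/negP => hlt; apply: hn; by exists w'.
case=> w' [e hlt].
have [f [e' hf]] := IH w' (leq_trans hlt hw).
by exists f; split => //; exact: weq_trans e e'.
Qed.

Lemma sym_core v : forall u C C' D, red (u ++ v) ->
  weq (delta C' C) (rev u) -> weq (delta C' D) v -> weq (delta D C) (rev (u ++ v)).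
Proof.
elim: v => [|s v IH] u C C' D hr h1 h2.
  by move: h2 => /d_eq <-; rewrite cats0.
have [C'' [h3 h4]] := wd3 C' D s.
have h4' : weq (delta C'' D) v.
  apply: weq_trans h4 _; apply: weq_trans (weq_cons s h2) _; exact: weq_sq0.
have hr1 : red (u ++ [:: s]) by apply: (red_prefix (v := v)); rewrite -catA.
have h5 : weq (delta C'' C) (rev (u ++ [:: s])).
  apply: weq_trans (wd2b h3 _) _.
    move=> n hn.
    have hu : red (rev u) by apply: red_rev; exact: (red_prefix hr1).
    have hn' := coxlen_uniq hn (coxlen_weq (weq_sym h1) hu).
    rewrite hn' size_rev.
    have hr2 := red_rev hr1.
    rewrite /red cats1 rev_rcons in hr2. rewrite [size _]/= size_rev in hr2.
    exact: coxlen_weq (weq_cons s (weq_sym h1)) hr2.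
  by rewrite cats1 rev_rcons; exact: weq_cons.
have := IH (u ++ [:: s]) C C'' D _ h5 h4'.
by rewrite -catA /=; apply.
Qed.

Lemma dsym C D : weq (delta D C) (rev (delta C D)).
Proof.
have [f [e hf]] := red_exists (delta C D).
have := sym_core (u := [::]) (C := C) (C' := C) hf (d_refl C) e.
move=> h; apply: weq_trans h _.
exact: weq_rev (weq_sym e).
Qed.

End Bldg.


Local Open Scope R_scope.

Definition V := (R * R * R)%type.
Definition vadd (x y : V) : V :=
  let '(x0, x1, x2) := x in let '(y0, y1, y2) := y in (x0 + y0, x1 + y1, x2 + y2).
Definition vscal (r : R) (x : V) : V :=
  let '(x0, x1, x2) := x in (r * x0, r * x1, r * x2).

Section Dihedral.
Variables (cm ck : R).

Definition Bf (u v : V) : R :=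
  let '(u0, u1, u2) := u in let '(v0, v1, v2) := v in
  u0 * v0 + u1 * v1 + u2 * v2 - cm * (u0 * v1 + u1 * v0) - ck * (u0 * v2 + u2 * v0).

Definition rfl (a v : V) : V := vadd v (vscal (-2 * Bf a v) a).

Lemma Bf_sym u v : Bf u v = Bf v u.
Proof. destruct u as [[u0 u1] u2]; destruct v as [[v0 v1] v2]; simpl; ring. Qed.

Lemma Bf_addr u v w : Bf u (vadd v w) = Bf u v + Bf u w.
Proof.
destruct u as [[u0 u1] u2]; destruct v as [[v0 v1] v2]; destruct w as [[w0 w1] w2];
simpl; ring.
Qed.

Lemma Bf_scalr u r v : Bf u (vscal r v) = r * Bf u v.
Proof. destruct u as [[u0 u1] u2]; destruct v as [[v0 v1] v2]; simpl; ring. Qed.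

Lemma rfl_add a v w : rfl a (vadd v w) = vadd (rfl a v) (rfl a w).
Proof.
rewrite /rfl Bf_addr.
destruct a as [[a0 a1] a2]; destruct v as [[v0 v1] v2]; destruct w as [[w0 w1] w2].
simpl; f_equal; [f_equal|]; ring.
Qed.

Lemma rfl_scal a r v : rfl a (vscal r v) = vscal r (rfl a v).
Proof.
rewrite /rfl Bf_scalr.
destruct a as [[a0 a1] a2]; destruct v as [[v0 v1] v2].
simpl; f_equal; [f_equal|]; ring.
Qed.

Lemma rfl_orth a v : Bf a v = 0 -> rfl a v = v.
Proof.
move=> h; rewrite /rfl h.
destruct a as [[a0 a1] a2]; destruct v as [[v0 v1] v2].
simpl; f_equal; [f_equal|]; ring.
Qed.

Lemma rfl_invol a v : Bf a a = 1 -> rfl a (rfl a v) = v.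
Proof.
move=> h.
have e : Bf a (rfl a v) = - Bf a v.
  by rewrite /rfl Bf_addr Bf_scalr h; ring.
rewrite {1}/rfl e /rfl.
destruct a as [[a0 a1] a2]; destruct v as [[v0 v1] v2].
simpl; f_equal; [f_equal|]; ring.
Qed.

Section Pair.
Variables (a b : V) (n : nat).
Hypothesis hn : leq 2 n.
Hypothesis haa : Bf a a = 1.
Hypothesis hbb : Bf b b = 1.
Hypothesis hab : Bf a b = - cos (PI / INR n).

Let phi := PI / INR n.
Let c := cos phi.
Let s := sin phi.

Lemma nR : 0 < INR n.
Proof. apply: lt_0_INR; apply/ltP; exact: leq_trans hn. Qed.

Lemma phi_pos : 0 < phi.
Proof. rewrite /phi; apply: Rdiv_lt_0_compat; [exact: PI_RGT_0 | exact: nR]. Qed.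

Lemma phi_lt : phi < PI.
Proof.
rewrite /phi.
have h2 : 2 <= INR n by (have := le_INR 2 n (ssrnat.leP hn)); simpl; lra.
have hp := PI_RGT_0.
have hi : / INR n <= / 2 by apply: Rinv_le_contravar; lra.
have := Rmult_le_compat_l PI _ _ (Rlt_le _ _ hp) hi.
rewrite /Rdiv; lra.
Qed.

Lemma s_pos : 0 < s.
Proof. apply: sin_gt_0; [exact: phi_pos | exact: phi_lt]. Qed.

Lemma one_c2 : 1 - c * c <> 0.
Proof.
have h := sin2_cos2 phi. have hs := s_pos.
rewrite /c; rewrite /s in hs. unfold Rsqr in h. nra.
Qed.

Definition comb (l u : R) : V := vadd (vscal l a) (vscal u b).
Let T (v : V) : V := rfl a (rfl b v).

Lemma T_comb l u : T (comb l u) = comb (2 * c * (2 * c * l - u) - l) (2 * c * l - u).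
Proof.
have hba : Bf b a = - c by rewrite Bf_sym hab.
have e1 : rfl b (comb l u) = comb l (2 * c * l - u).
  rewrite /rfl /comb Bf_addr !Bf_scalr hba hbb.
  destruct a as [[a0 a1] a2]; destruct b as [[b0 b1] b2].
  simpl; f_equal; [f_equal|]; ring.
rewrite /T e1 /rfl /comb Bf_addr !Bf_scalr haa hab -/c.
destruct a as [[a0 a1] a2]; destruct b as [[b0 b1] b2].
simpl; f_equal; [f_equal|]; ring.
Qed.

Let S (r : R) := sin (r * phi).

Lemma S_rec x y z : y = x + 1 -> z = x - 1 -> S y = 2 * c * S x - S z.
Proof.
move=> -> ->; rewrite /S /c.
replace ((x + 1) * phi) with (x * phi + phi) by ring.
replace ((x - 1) * phi) with (x * phi - phi) by ring.
rewrite sin_plus sin_minus; ring.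
Qed.

Definition Pv (r : R) := comb (S (2 * r + 1) / s) (S (2 * r) / s).
Definition Qv (r : R) := comb (- S (2 * r) / s) (- S (2 * r - 1) / s).

Lemma T_P r : T (Pv r) = Pv (r + 1).
Proof.
have hs := s_pos.
rewrite /Pv T_comb.
have e1 : S (2 * (r + 1)) = 2 * c * S (2 * r + 1) - S (2 * r) by apply: S_rec; ring.
have e2 : S (2 * (r + 1) + 1) = 2 * c * S (2 * (r + 1)) - S (2 * r + 1) by apply: S_rec; ring.
rewrite e2 e1; f_equal; field; lra.
Qed.

Lemma T_Q r : T (Qv r) = Qv (r + 1).
Proof.
have hs := s_pos.
rewrite /Qv T_comb.
have e1 : S (2 * (r + 1) - 1) = 2 * c * S (2 * r) - S (2 * r - 1) by apply: S_rec; ring.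
have e2 : S (2 * (r + 1)) = 2 * c * S (2 * r + 1) - S (2 * r) by apply: S_rec; ring.
have e3 : S (2 * r + 1) = 2 * c * S (2 * r) - S (2 * r - 1) by apply: S_rec; ring.
rewrite e2 e1 e3; f_equal; field; lra.
Qed.

Lemma iter_P j : iter j T (Pv 0) = Pv (INR j).
Proof.
elim: j => [|j IH]; first by [].
by rewrite iterS IH T_P -S_INR.
Qed.

Lemma iter_Q j : iter j T (Qv 0) = Qv (INR j).
Proof.
elim: j => [|j IH]; first by [].
by rewrite iterS IH T_Q -S_INR.
Qed.

Lemma Pv0 : Pv 0 = a.
Proof.
have hs := s_pos.
rewrite /Pv /S.
replace ((2 * 0 + 1) * phi) with phi by ring.
replace (2 * 0 * phi) with 0 by ring.
rewrite sin_0 -/s.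
replace (s / s) with 1 by (field; lra).
replace (0 / s) with 0 by (field; lra).
rewrite /comb; destruct a as [[a0 a1] a2]; destruct b as [[b0 b1] b2].
simpl; f_equal; [f_equal|]; ring.
Qed.

Lemma Qv0 : Qv 0 = b.
Proof.
have hs := s_pos.
rewrite /Qv /S.
replace ((2 * 0 - 1) * phi) with (- phi) by ring.
replace (2 * 0 * phi) with 0 by ring.
rewrite sin_0 sin_neg -/s.
replace (- - s / s) with 1 by (field; lra).
replace (- 0 / s) with 0 by (field; lra).
rewrite /comb; destruct a as [[a0 a1] a2]; destruct b as [[b0 b1] b2].
simpl; f_equal; [f_equal|]; ring.
Qed.

Lemma Pvn : Pv (INR n) = a.
Proof.
have hs := s_pos. have hn' := nR.
rewrite -[RHS]Pv0 /Pv /S.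
replace ((2 * INR n + 1) * phi) with (2 * PI + phi) by (rewrite /phi; field; lra).
replace (2 * INR n * phi) with (2 * PI) by (rewrite /phi; field; lra).
replace ((2 * 0 + 1) * phi) with phi by ring.
replace (2 * 0 * phi) with 0 by ring.
by rewrite sin_plus sin_2PI cos_2PI sin_0 Rmult_0_l Rmult_1_l Rplus_0_l.
Qed.

Lemma Qvn : Qv (INR n) = b.
Proof.
have hs := s_pos. have hn' := nR.
rewrite -[RHS]Qv0 /Qv /S.
replace ((2 * INR n - 1) * phi) with (2 * PI - phi) by (rewrite /phi; field; lra).
replace (2 * INR n * phi) with (2 * PI) by (rewrite /phi; field; lra).
replace ((2 * 0 - 1) * phi) with (- phi) by ring.
replace (2 * 0 * phi) with 0 by ring.
by rewrite sin_minus sin_neg sin_2PI cos_2PI sin_0 Rmult_0_l Rmult_1_l Rminus_0_l.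
Qed.

Lemma iter_add j v w : iter j T (vadd v w) = vadd (iter j T v) (iter j T w).
Proof. elim: j => [|j IH] //; by rewrite !iterS IH /T !rfl_add. Qed.

Lemma iter_scal j r v : iter j T (vscal r v) = vscal r (iter j T v).
Proof. elim: j => [|j IH] //; by rewrite !iterS IH /T !rfl_scal. Qed.

Lemma iter_orth j u : Bf a u = 0 -> Bf b u = 0 -> iter j T u = u.
Proof. move=> h1 h2; elim: j => [|j IH] //; by rewrite iterS IH /T !rfl_orth. Qed.

Lemma dihedral v : iter n T v = v.
Proof.
have h := one_c2.
set l := (Bf a v + c * Bf b v) / (1 - c * c).
set u := (Bf b v + c * Bf a v) / (1 - c * c).
set w := vadd v (vscal (-1) (comb l u)).
have ev : v = vadd (comb l u) w.
  rewrite /w /comb; destruct v as [[v0 v1] v2]; destruct a as [[a0 a1] a2]; destruct b as [[b0 b1] b2].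
  simpl; f_equal; [f_equal|]; ring.
have hba : Bf b a = - c by rewrite Bf_sym hab.
have hw1 : Bf a w = 0.
  rewrite /w /comb Bf_addr !Bf_scalr Bf_addr !Bf_scalr haa hab -/c /l /u; field; exact: h.
have hw2 : Bf b w = 0.
  rewrite /w /comb Bf_addr !Bf_scalr Bf_addr !Bf_scalr hbb hba /l /u; field; exact: h.
have ea : iter n T a = a by have := iter_P n; rewrite Pv0 Pvn.
have eb : iter n T b = b by have := iter_Q n; rewrite Qv0 Qvn.
rewrite ev iter_add (iter_orth _ hw1 hw2) /comb iter_add !iter_scal.
by rewrite ea eb.
Qed.

End Pair.
End Dihedral.

Local Close Scope R_scope.


Section Rep.
Variables (k m : nat).
Hypothesis hk : 3 <= k.
Hypothesis hm : 3 <= m.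

Local Open Scope R_scope.

Definition cm := cos (PI / INR m).
Definition ck := cos (PI / INR k).

Definition alpha (i : 'I_3) : V :=
  match nat_of_ord i with 0%N => (1, 0, 0) | 1%N => (0, 1, 0) | _ => (0, 0, 1) end.

Definition sg (i : 'I_3) (v : V) : V := rfl cm ck (alpha i) v.

Fixpoint rho (w : word) (v : V) : V :=
  match w with [::] => v | i :: w' => sg i (rho w' v) end.

Lemma rho_cat u w v : rho (u ++ w) v = rho u (rho w v).
Proof. by elim: u => [|i u IH] //=; rewrite IH. Qed.

Lemma INR2 : INR 2 = 2.
Proof. simpl; ring. Qed.

Lemma gram_ii i : Bf cm ck (alpha i) (alpha i) = 1.
Proof. case: i => [[|[|[|?]]] ?] //=; ring. Qed.

Lemma gram_ij (i j : 'I_3) : i != j ->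
  Bf cm ck (alpha i) (alpha j) = - cos (PI / INR (coxm k m i j)).
Proof.
case: i => [[|[|[|?]]] hi] //; case: j => [[|[|[|?]]] hj] //= _;
rewrite /coxm /= /cm /ck ?INR2 ?cos_PI2; ring.
Qed.

Lemma coxm_ge2 (i j : 'I_3) : i != j -> leq 2 (coxm k m i j).
Proof.
move=> h; rewrite /coxm (negbTE h).
case: ifP => // _; case: ifP => _; exact: leq_trans hm || exact: leq_trans hk.
Qed.

Lemma relR (i j : 'I_3) v : iter (coxm k m i j) (fun x => sg i (sg j x)) v = v.
Proof.
have [<-|ne] := eqVneq i j.
  by rewrite coxm_ii /= /sg rfl_invol // gram_ii.
apply: dihedral; [exact: coxm_ge2 | exact: gram_ii | exact: gram_ii | exact: gram_ij].
Qed.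

Lemma rho_flat n (i j : 'I_3) v :
  rho (flatten (nseq n [:: i; j])) v = iter n (fun x => sg i (sg j x)) v.
Proof. by elim: n => [|n IH] //=; rewrite IH. Qed.

Lemma rho_weq u w : weq k m u w -> forall v, rho u v = rho w v.
Proof.
elim=> {u w} [u|u w _ IH|u w x _ IH1 _ IH2|u w i j] v.
- by [].
- by rewrite IH.
- by rewrite IH1 IH2.
- by rewrite !rho_cat rho_flat relR.
Qed.

Lemma rho_scal w r v : rho w (vscal r v) = vscal r (rho w v).
Proof. by elim: w => [|i w IH] //=; rewrite IH /sg rfl_scal. Qed.

Definition c1 (v : V) : R := snd (fst v).
Definition c2 (v : V) : R := snd v.

Lemma rho_c1 X v : all (fun s => s != i1) X -> c1 (rho X v) = c1 v.
Proof.
elim: X => [|s X IH] //= /andP [hs hX].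
rewrite -(IH hX); move: (rho X v) => w.
move: hs; case: s => [[|[|[|?]]] ?] //= _; destruct w as [[w0 w1] w2]; rewrite /c1 /=; ring.
Qed.

Lemma rho_c2 X v : all (fun s => s != i2) X -> c2 (rho X v) = c2 v.
Proof.
elim: X => [|s X IH] //= /andP [hs hX].
rewrite -(IH hX); move: (rho X v) => w.
move: hs; case: s => [[|[|[|?]]] ?] //= _; destruct w as [[w0 w1] w2]; rewrite /c2 /=; ring.
Qed.

Definition th := PI / INR k.
Definition p0 := - cm / (1 - ck * ck).
Definition at_ (t : nat) : nat := if odd t then t.+1 else t.
Definition bt (t : nat) : nat := if odd t then t else t.+1.
Definition Vt (t : nat) : V :=
  (p0 * (cos (INR (at_ t) * th) - 1), 1, p0 * (cos (INR (bt t) * th) - ck)).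
Definition a1 : V := (0, 1, 0).

Lemma cos_rec x : cos ((x + 2) * th) = 2 * ck * cos ((x + 1) * th) - cos (x * th).
Proof.
replace ((x + 2) * th) with ((x + 1) * th + th) by ring.
replace (x * th) with ((x + 1) * th - th) by ring.
rewrite cos_plus cos_minus /ck -/th; ring.
Qed.

Lemma kR : 0 < INR k.
Proof. apply: lt_0_INR; apply/ltP; exact: leq_trans hk. Qed.

Lemma th_pos : 0 < th.
Proof. apply: Rdiv_lt_0_compat; [exact: PI_RGT_0 | exact: kR]. Qed.

Lemma th_lt : th < PI.
Proof.
rewrite /th.
have h2 : 3 <= INR k by (have := le_INR 3 k (ssrnat.leP hk)); simpl; lra.
have hp := PI_RGT_0.
have hi : / INR k <= / 3 by apply: Rinv_le_contravar; lra.
have := Rmult_le_compat_l PI _ _ (Rlt_le _ _ hp) hi.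
rewrite /Rdiv; lra.
Qed.

Lemma one_ck : 0 < 1 - ck * ck.
Proof.
have h := sin2_cos2 th. have hs : 0 < sin th by apply: sin_gt_0; [exact: th_pos|exact: th_lt].
rewrite /ck -/th; unfold Rsqr in h. nra.
Qed.

Lemma cm_pos : 0 < cm.
Proof.
rewrite /cm; apply: cos_gt_0.
  have : 0 < PI / INR m.
    apply: Rdiv_lt_0_compat; [exact: PI_RGT_0|]. apply: lt_0_INR; apply/ltP; exact: leq_trans hm.
  have := PI_RGT_0; lra.
have h2 : 3 <= INR m by (have := le_INR 3 m (ssrnat.leP hm)); simpl; lra.
have hp := PI_RGT_0.
have hi : / INR m <= / 3 by apply: Rinv_le_contravar; lra.
have := Rmult_le_compat_l PI _ _ (Rlt_le _ _ hp) hi.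
rewrite /Rdiv; lra.
Qed.

Lemma p0_neg : p0 < 0.
Proof.
have h1 := one_ck; have h2 := cm_pos.
rewrite /p0 /Rdiv.
have : 0 < / (1 - ck * ck) by apply: Rinv_0_lt_compat.
nra.
Qed.

Lemma rho_wd t : rho (wd t) a1 = Vt t.
Proof.
have h1 := one_ck.
elim: t => [|t IH].
  rewrite /= /Vt /at_ /bt /= Rmult_0_l cos_0 Rmult_1_l /ck -/th /a1.
  f_equal; [f_equal|]; ring.
have -> : rho (wd t.+1) a1 = sg (cc t) (Vt t) by rewrite /= IH.
case ho: (odd t).
- have ea : at_ t = t.+1 by rewrite /at_ ho.
  have eb : bt t = t by rewrite /bt ho.
  have ea' : at_ t.+1 = t.+1 by rewrite /at_ /= ho.
  have eb' : bt t.+1 = t.+2 by rewrite /bt /= ho.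
  rewrite /Vt ea eb ea' eb' !S_INR /cc ho /sg /rfl /alpha /=.
  replace (INR t + 1 + 1) with (INR t + 2) by ring.
  rewrite cos_rec.
  f_equal; [f_equal|]; ring.
- have ea : at_ t = t by rewrite /at_ ho.
  have eb : bt t = t.+1 by rewrite /bt ho.
  have ea' : at_ t.+1 = t.+2 by rewrite /at_ /= ho.
  have eb' : bt t.+1 = t.+1 by rewrite /bt /= ho.
  rewrite /Vt ea eb ea' eb' !S_INR /cc ho /sg /rfl /alpha /=.
  replace (INR t + 1 + 1) with (INR t + 2) by ring.
  rewrite cos_rec.
  f_equal; [f_equal|]; rewrite /p0; field; lra.
Qed.

End Rep.


Section Trig.
Variables (k m : nat).
Hypothesis hk : 3 <= k.
Hypothesis hm : 3 <= m.

Local Open Scope R_scope.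

Local Notation th := (th k).
Local Notation ck := (ck k).

Lemma INR_add (x y : nat) : INR (x + y)%N = INR x + INR y.
Proof. exact: plus_INR. Qed.

Lemma kth : INR k * th = PI.
Proof. have h := kR hk. rewrite /th; field; lra. Qed.

Lemma cos_le (j : nat) : leq 1 j -> leq j k ->
  (cos (INR j * th) <= ck) /\ (cos (INR j * th) = ck -> j = 1%N).
Proof.
move=> h1 h2.
have hp := th_pos hk. have hl := th_lt hk.
case: (eqVneq j 1%N) => [->|ne].
  by rewrite /= Rmult_1_l /Submission.ck -/th; split; [lra|].
have hj : 2 <= INR j.
  have : leq 2 j by lia.
  move/ssrnat.leP/le_INR; simpl; lra.
have hjk : INR j <= INR k by apply: le_INR; apply/ssrnat.leP.
have hlt : cos (INR j * th) < ck.
  rewrite /Submission.ck -/th.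
  apply: cos_decreasing_1; try lra.
  - nra.
  - have := kth; nra.
  - nra.
split; [lra|move=> e; lra].
Qed.

Lemma ck_lt1 : ck < 1.
Proof.
have hp := th_pos hk. have hl := th_lt hk.
rewrite /Submission.ck -/th -cos_0.
apply: cos_decreasing_1; lra.
Qed.

Lemma cos_refl (a : nat) : leq a (k.*2) -> cos (INR a * th) = cos (INR (k.*2 - a) * th).
Proof.
move=> h.
have e : INR (k.*2 - a) = 2 * INR k - INR a.
  have : INR (k.*2 - a + a)%N = INR (k.*2) by rewrite subnK.
  rewrite INR_add -addnn INR_add; lra.
rewrite e.
replace ((2 * INR k - INR a) * th) with (2 * PI - INR a * th) by (have := kth; lra).
by rewrite cos_minus cos_2PI sin_2PI; ring_simplify.
Qed.

Lemma F1trig t : leq t.+1 (k.*2) -> cos (INR (at_ t) * th) = 1 -> t = 0%N \/ t = (k.*2).-1.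
Proof.
move=> ht e.
have ha : leq (at_ t) (k.*2) by rewrite /at_; case: (odd t); lia.
have hc := ck_lt1.
case: (eqVneq (at_ t) 0%N) => [h0|n0].
  by left; move: h0; rewrite /at_; case: (odd t) => //.
case: (eqVneq (at_ t) (k.*2)) => [h2|n2].
  right; move: h2; rewrite /at_; case: (odd t) => h2; lia.
exfalso.
case: (leqP (at_ t) k) => hak.
  have [h _] := cos_le (j := at_ t) ltac:(lia) hak. lra.
rewrite cos_refl // in e.
have [h _] := cos_le (j := k.*2 - at_ t) ltac:(lia) ltac:(lia). lra.
Qed.

Lemma odd_2k1 : odd (k.*2).-1.
Proof. by case: k hk => // k' _; rewrite doubleS /= odd_double. Qed.

Lemma F2trig t : leq t.+1 (k.*2) ->
  (0 <= p0 k m * (cos (INR (bt t) * th) - ck)) /\ (p0 k m * (cos (INR (bt t) * th) - ck) = 0 ->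
     t = 0%N \/ t = 1%N \/ t = (k.*2).-2 \/ t = (k.*2).-1).
Proof.
move=> ht.
have hp := p0_neg hk hm.
have hne : t <> (k.*2).-1 -> leq (bt t) (k.*2).-1 /\ leq 1 (bt t).
  move=> hn; rewrite /bt; case ho: (odd t); first by lia.
  split; last by lia.
  have : t != (k.*2).-1 by apply/eqP.
  lia.
have hb : leq (bt t) (k.*2).-1 /\ leq 1 (bt t).
  case: (eqVneq t (k.*2).-1) => [e|n]; last by apply: hne; apply/eqP.
  rewrite /bt e odd_2k1; lia.
case: hb => hb1 hb2.
have key : (cos (INR (bt t) * th) <= ck) /\ (cos (INR (bt t) * th) = ck -> bt t = 1%N \/ bt t = (k.*2).-1).
  case: (leqP (bt t) k) => hbk.
    have [h1 h2] := cos_le hb2 hbk.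
    by split => // e; left; apply: h2.
  rewrite cos_refl; last by lia.
  have [h1 h2] := cos_le (j := k.*2 - bt t) ltac:(lia) ltac:(lia).
  split => // e; right; have := h2 e; lia.
case: key => h1 h2.
split; first nra.
move=> e0.
have e : cos (INR (bt t) * th) = ck.
  case: (Rmult_integral _ _ e0) => h; [lra|lra].
case: (h2 e); rewrite /bt; case ho: (odd t) => hb.
- by right; left.
- by left; lia.
- by right; right; right.
- right; right; left.
  have : t != (k.*2).-1 by apply/negP => /eqP ee; rewrite ee odd_2k1 in ho.
  lia.
Qed.

End Trig.


Section FF.
Variables (k m : nat).
Hypothesis hk : 3 <= k.
Hypothesis hm : 3 <= m.
Local Notation weq := (weq k m).
Local Open Scope R_scope.

Lemma k0 : leq 1 k. Proof. exact: leq_trans hk. Qed.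

Lemma sg1_a1 : sg k m i1 a1 = vscal (-1) a1.
Proof. rewrite /sg /rfl /a1 /alpha /=; f_equal; [f_equal|]; ring. Qed.

Lemma F1 X Y : all (fun s => s != i1) X -> all (fun s => s != i1) Y ->
  weq (i1 :: X) (Y ++ [:: i1]) -> weq X [::] \/ weq X [:: i2].
Proof.
move=> hX hY e.
have [t [ht eX]] := nf_all m k0 hX.
have := rho_weq hk hm e a1.
have e1 : rho k m (i1 :: X) a1 = sg k m i1 (rho k m X a1) by [].
have e2 : rho k m [:: i1] a1 = sg k m i1 a1 by [].
rewrite e1 rho_cat e2 (rho_weq hk hm eX) (rho_wd m hk) sg1_a1 rho_scal.
move=> /(f_equal (@c1)) h.
have hw : c1 (rho k m Y a1) = 1 by rewrite rho_c1.
move: h hw; move: (rho k m Y a1) => [[w0 w1] w2].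
rewrite /sg /rfl /alpha /Vt /c1 /a1 /=.
move=> h hw.
have hc : (cos (INR (at_ t) * th k) = 1).
  have h1 := cm_pos hm. have h2 := p0_neg hk hm.
  have : (cm m * p0 k m * (cos (INR (at_ t) * th k) - 1) = 0) by lra.
  case/Rmult_integral => [/Rmult_integral [] | ]; lra.
case: (F1trig hk hm ht hc) => et; rewrite et in eX.
  by left.
right; exact: weq_trans eX (wd2k1 m k0).
Qed.

Definition nfX (X : word) :=
  weq X [::] \/ weq X [:: i0] \/ weq X [:: i0; i2] \/ weq X [:: i2].

Lemma F2 g X Y : all (fun s => s != i2) g -> all (fun s => s != i1) X ->
  all (fun s => s != i1) Y -> weq (g ++ X) (Y ++ [:: i1]) -> nfX X.
Proof.
move=> hg hX hY e.
have [t [ht eX]] := nf_all m k0 hX.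
have [t' [ht' eY]] := nf_all m k0 hY.
have := rho_weq hk hm e a1.
have e2 : rho k m [:: i1] a1 = sg k m i1 a1 by [].
rewrite !rho_cat e2 (rho_weq hk hm eX) (rho_weq hk hm eY) !(rho_wd m hk) sg1_a1 rho_scal (rho_wd m hk).
move=> /(f_equal (@c2)).
rewrite rho_c2 //.
rewrite /Vt /c2 /=.
move=> h.
have [a1p a2p] := F2trig hk hm ht.
have [b1p _] := F2trig hk hm ht'.
have h0 : (p0 k m * (cos (INR (bt t) * th k) - ck k) = 0) by lra.
rewrite /nfX.
case: (a2p h0) => [et|[et|[et|et]]]; rewrite et in eX.
- by left.
- by right; left.
- right; right; left; exact: weq_trans eX (wd2k2 m k0).
- right; right; right; exact: weq_trans eX (wd2k1 m k0).
Qed.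

End FF.


Section Main.
Variables (k m : nat) (Ch : Type) (delta : Ch -> Ch -> word).
Hypothesis hB : is_building k m delta.
Hypothesis hk : 3 <= k.
Hypothesis hm : 3 <= m.
Local Notation weq := (weq k m).
Local Notation sv := (samevert k m delta).

Lemma NORM E E' : sv i0 E E' -> ~ sv i1 E E' ->
  exists B, sv i0 E B /\ sv i1 E' B /\ weq (delta E B) [:: i1].
Proof.
move=> h n.
have [g [hg e]] := sv_in hB h.
case: (nf12_all k m hg) => [e1|[e1|[e1|e1]]].
- by case: n; apply: (gal_sv hB (f := [::])) => //; exact: weq_trans e e1.
- exists E'; split => //; split; first exact: (sv_refl k m delta).
  exact: weq_trans e e1.
- by case: n; apply: (gal_sv hB (f := [:: i2])) => //; exact: weq_trans e e1.
- have e2 : weq (delta E' E) [:: i2; i1].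
    apply: weq_trans (dsym hB E E') _.
    exact: (weq_rev (weq_trans e e1)).
  have [B [hB1 hB2]] := wd3 hB E' E i2.
  have e3 : weq (delta B E) [:: i1].
    apply: weq_trans hB2 _; apply: weq_trans (weq_cons i2 e2) _; exact: weq_sq0.
  exists B; split.
    by apply: (gal_sv hB (f := [:: i1])) => //; exact: (sadj_sym hB).
  split; last exact: (sadj_sym hB).
  by apply: (sv_sym hB); apply: (gal_sv hB (f := [:: i2])).
Qed.

Lemma Core1 A B C D : sv i1 A C -> sv i1 B D -> ~ sv i1 A D ->
  weq (delta A B) [:: i1] -> weq (delta C D) [:: i1] -> sv i0 A C.
Proof.
move=> hAC hBD nAD hAB hCD.
have [x [hx ex]] := sv_in hB hAC.
have [y [hy ey]] := sv_in hB hBD.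
have hAD : weq (delta A D) (i1 :: y).
  case: (wd2a hB D hAB) => h.
    exact: weq_trans h (weq_cons i1 ey).
  by case: nAD; apply: (gal_sv hB hy); exact: weq_trans h ey.
have hDC : weq (delta D C) [:: i1] := sadj_sym hB hCD.
have eCA : weq (delta C A) (rev x) by apply: weq_trans (dsym hB A C) (weq_rev ex).
have hx' : all (fun s => s != i1) (rev x) by rewrite all_rev.
have hDA : weq (delta D A) (i1 :: rev x).
  case: (wd2a hB A hDC) => h.
    exact: weq_trans h (weq_cons i1 eCA).
  by case: nAD; apply: (sv_sym hB); apply: (gal_sv hB hx'); exact: weq_trans h eCA.
have hDA' : weq (delta D A) (rev y ++ [:: i1]).
  apply: weq_trans (dsym hB A D) _.
  have := weq_rev hAD; by rewrite rev_cons cats1.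
have hy' : all (fun s => s != i1) (rev y) by rewrite all_rev.
have := F1 hk hm hx' hy' (weq_trans (weq_sym hDA) hDA').
case=> h; apply: (sv_sym hB).
- by apply: (gal_sv hB (f := [::])) => //; exact: weq_trans eCA h.
- by apply: (gal_sv hB (f := [:: i2])) => //; exact: weq_trans eCA h.
Qed.

Lemma Core2 A B G H : sv i1 A G -> sv i1 B H -> sv i2 G H -> ~ sv i1 A H ->
  weq (delta A B) [:: i1] -> exists K, sv i0 A K /\ sv i2 K G.
Proof.
move=> hAG hBH hGH nAH hAB.
have [x [hx ex]] := sv_in hB hAG.
have [y [hy ey]] := sv_in hB hBH.
have hAH : weq (delta A H) (i1 :: y).
  case: (wd2a hB H hAB) => h.
    exact: weq_trans h (weq_cons i1 ey).
  by case: nAH; apply: (gal_sv hB hy); exact: weq_trans h ey.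
have [g [hg eg]] := sv_delta hB A (sv_sym hB hGH).
have eGA : weq (delta G A) (rev x) by apply: weq_trans (dsym hB A G) (weq_rev ex).
have hx' : all (fun s => s != i1) (rev x) by rewrite all_rev.
have hy' : all (fun s => s != i1) (rev y) by rewrite all_rev.
have e1 : weq (delta H A) (g ++ rev x) := weq_trans eg (weq_catl g eGA).
have e2 : weq (delta H A) (rev y ++ [:: i1]).
  apply: weq_trans (dsym hB A H) _.
  have := weq_rev hAH; by rewrite rev_cons cats1.
have := F2 hk hm hg hx' hy' (weq_trans (weq_sym e1) e2).
have fin : forall f1 f2, all (fun s => s != i0) f1 -> all (fun s => s != i2) f2 ->
    weq (rev x) (rev (f1 ++ f2)) -> exists K, sv i0 A K /\ sv i2 K G.
  move=> f1 f2 h1 h2 e.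
  apply: (gal_sv2 hB h1 h2).
  apply: weq_trans ex _.
  have := weq_rev e; by rewrite !revK.
case=> [e|[e|[e|e]]].
- by apply: (fin [::] [::]).
- by apply: (fin [::] [:: i0]).
- by apply: (fin [:: i2] [:: i0]).
- by apply: (fin [:: i2] [::]).
Qed.

End Main.

Theorem corollary5p4 (k m : nat) (hk : 3 <= k) (hm : 6 <= m)
  (Ch : Type) (delta : Ch -> Ch -> word)
  (hB : is_building k m delta) (hfin : finite_thickness k m delta)
  (v v' w : Ch) :
  ~ samevert k m delta typek v v' ->
  vadj k m delta typek v type2 w ->
  vadj k m delta typek v' type2 w ->
  (forall w' : Ch,
     vadj k m delta typek v type2 w' -> vadj k m delta typek v' type2 w' ->
     samevert k m delta type2 w w') /\
  (forall u : Ch,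
     vadj k m delta typek v typem u -> vadj k m delta typek v' typem u ->
     vadj k m delta type2 w typem u).
Proof.
have hm3 : 3 <= m by apply: leq_trans hm.
move=> nvv' [_ [E [hvE hwE]]] [_ [E' [hv'E' hwE']]].
have hEE' : samevert k m delta i0 E E' := sv_trans (sv_sym hB hwE) hwE'.
have nEE' : ~ samevert k m delta i1 E E'.
  by move=> h; apply: nvv'; apply: sv_trans hvE (sv_trans h (sv_sym hB hv'E')).
have [B [hEB [hE'B hABd]]] := NORM hB hEE' nEE'.
split.
- move=> w' [_ [F [hvF hw'F]]] [_ [F' [hv'F' hw'F']]].
  have hFF' : samevert k m delta i0 F F' := sv_trans (sv_sym hB hw'F) hw'F'.
  have nFF' : ~ samevert k m delta i1 F F'.
    by move=> h; apply: nvv'; apply: sv_trans hvF (sv_trans h (sv_sym hB hv'F')).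
  have [D [hFD [hF'D hCDd]]] := NORM hB hFF' nFF'.
  have hEF := sv_trans (sv_sym hB hvE) hvF.
  have hBD := sv_trans (sv_sym hB hE'B) (sv_trans (sv_sym hB hv'E') (sv_trans hv'F' hF'D)).
  have nED : ~ samevert k m delta i1 E D.
    move=> h; apply: nvv'.
    have h2 : samevert k m delta i1 D v' := sv_sym hB (sv_trans hv'F' hF'D).
    exact: sv_trans hvE (sv_trans h h2).
  have := Core1 hB hk hm3 hEF hBD nED hABd hCDd.
  move=> h; exact: sv_trans hwE (sv_trans h (sv_sym hB hw'F)).
- move=> u [_ [G [hvG huG]]] [_ [H [hv'H huH]]].
  have hEG := sv_trans (sv_sym hB hvE) hvG.
  have hBH := sv_trans (sv_sym hB hE'B) (sv_trans (sv_sym hB hv'E') hv'H).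
  have hGH := sv_trans (sv_sym hB huG) huH.
  have nEH : ~ samevert k m delta i1 E H.
    move=> h; apply: nvv'; apply: sv_trans hvE (sv_trans h (sv_sym hB hv'H)).
  have [K [hEK hKG]] := Core2 hB hk hm3 hEG hBH hGH nEH hABd.
  split; first by [].
  exists K; split; first exact: sv_trans hwE hEK.
  exact: sv_trans huG (sv_sym hB hKG).
Qed.
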